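(* Each of the semantics $\mathit{stg}$, $\mathit{tfstg2}$ and $\mathit{stg1.5}$ fails to be $\preceq^E_\cap$-skepticism adequate and fails to be $\preceq^E_W$-skepticism adequate.
   Context: An argumentation framework (AF) is $\mathcal{F}=(A_{\mathcal{F}},R_{\mathcal{F}})$ with $R_{\mathcal{F}}\subseteq A_{\mathcal{F}}\times A_{\mathcal{F}}$; $a\rightarrow b$ means $(a,b)\in R_{\mathcal{F}}$. $\mathrm{conf}(\mathcal{F})=\{(x,y):(x,y)\in R_{\mathcal{F}}\text{ or }(y,x)\in R_{\mathcal{F}}\}$. $\tau_1\preceq^E_\cap\tau_2$ iff $\bigcap_{S_1\in\tau_1}S_1\subseteq\bigcap_{S_2\in\tau_2}S_2$; $\tau_1\preceq^E_W\tau_2$ iff for every $S_2\in\tau_2$ there is $S_1\in\tau_1$ with $S_1\subseteq S_2$. A semantics $\sigma$ is $\preceq$-skepticism adequate if for any AFs $\mathcal{F},\mathcal{G}$ on the same argument set with $R_{\mathcal{F}}\supseteq R_{\mathcal{G}}$ and $\mathrm{conf}(\mathcal{F})=\mathrm{conf}(\mathcal{G})$, $\sigma(\mathcal{F})\preceq\sigma(\mathcal{G})$. $\mathcal{F}|_B=(A_{\mathcal{F}}\cap B,R_{\mathcal{F}}\cap(B\times B))$. Conflict-free: no $a,b\in S$ with $a\rightarrow b$; $S^\oplus=S\cup\{x:\exists y\in S,\ y\rightarrow x\}$; $\mathit{stg}(\mathcal{F})$: conflict-free $S$ with no conflict-free $T$ such that $S^\oplus\subsetneq T^\oplus$. $\mathrm{SCC}(a)$: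 set of $b$ with directed attack paths (possibly of length 0) from $a$ to $b$ and back. $D_S(X)=\{b\in X:\exists a\in S\setminus X,\ a\rightarrow b\}$. $\mathit{tfstg2}$: $C^0_S(a)=\mathrm{SCC}(a)$; $C^{\alpha+1}_S(a)$ = component of $a$ in $\mathcal{F}|_{C^\alpha_S(a)\setminus D_S(C^\alpha_S(a))}$; for limit $\lambda$, component of $a$ in $\mathcal{F}|_{\bigcap_{\alpha<\lambda}C^\alpha_S(a)}$; $\alpha_S(a)$ = least $\alpha$ with $a\notin C^\alpha_S(a)$ or $C^{\alpha+1}_S(a)=C^\alpha_S(a)$; $S\in\mathit{tfstg2}(\mathcal{F})$ iff conflict-free and for each $a$, $a\notin C^{\alpha_S(a)}_S(a)$ or $S\cap C^{\alpha_S(a)}_S(a)$ is a stage extension of $\mathcal{F}|_{C^{\alpha_S(a)}_S(a)}$. $\mathit{stg1.5}$: $S$ conflict-free and for each strongly connected component $X$ of $\mathcal{F}$, $S\cap X$ is a stage extension of $\mathcal{F}|_{X\setminus D_S(X)}$. *)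

(* Defs.v *)
From mathcomp Require Import all_boot.
Set Implicit Arguments. Unset Strict Implicit. Unset Printing Implicit Defensive.

Record AF (T : finType) := mkAF { args : {set T}; att : rel T }.

Section Defs.
Variable T : finType.
Implicit Types (F : AF T) (S U X B : {set T}).

Definition wf_AF F := forall x y, att F x y -> (x \in args F) && (y \in args F).

Definition conf F : rel T := fun x y => att F x y || att F y x.

Definition restrict F B : AF T :=
  mkAF (args F :&: B) (fun x y => [&& att F x y, x \in B & y \in B]).

Definition conflict_free F S :=
  (S \subset args F) && [forall x in S, forall y in S, ~~ att F x y].

Definition range F S := S :|: [set x in args F | [exists y in S, att F y x]].

Definition stg F : {set {set T}} :=
  [set S : {set T} | conflict_free F S &&
     [forall U : {set T}, conflict_free F U ==> ~~ (range F S \proper range F U)]].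

Definition attA F : rel T := fun x y => [&& att F x y, x \in args F & y \in args F].

(* SCC(a) in F (empty if a is not an argument of F) *)
Definition scc F (a : T) : {set T} :=
  [set b in args F | (a \in args F) && connect (attA F) a b && connect (attA F) b a].

Definition DS F S X : {set T} := [set b in X | [exists a in S :\: X, att F a b]].

Fixpoint Cit F S (a : T) (n : nat) : {set T} :=
  match n with
  | 0 => scc F a
  | n'.+1 => let X := Cit F S a n' in scc (restrict F (X :\: DS F S X)) a
  end.

(* alpha_S(a): least n with a \notin C^n or C^{n+1} = C^n (always reached
   before #|T|.+2 in a finite AF). *)
Definition alphaS F S (a : T) : nat :=
  find (fun n => (a \notin Cit F S a n) || (Cit F S a n.+1 == Cit F S a n))
       (iota 0 (#|T|.+2)).

Definition tfstg2 F : {set {set T}} :=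
  [set S : {set T} | conflict_free F S &&
     [forall a in args F,
        let C := Cit F S a (alphaS F S a) in
        (a \notin C) || (S :&: C \in stg (restrict F C))]].

(* stg1.5: the SCCs of F are exactly the sets scc F a, a an argument. *)
Definition stg15 F : {set {set T}} :=
  [set S : {set T} | conflict_free F S &&
     [forall a in args F,
        let X := scc F a in S :&: X \in stg (restrict F (X :\: DS F S X))]].

Definition prec_cap (t1 t2 : {set {set T}}) :=
  (\bigcap_(S in t1) S) \subset (\bigcap_(S in t2) S).

Definition prec_W (t1 t2 : {set {set T}}) :=
  [forall S2 in t2, exists S1 in t1, S1 \subset S2].

End Defs.

Definition semantics := forall T : finType, AF T -> {set {set T}}.
Definition ordering := forall T : finType, {set {set T}} -> {set {set T}} -> bool.

Definition skepticism_adequate (pre : ordering) (sigma : semantics) : Prop :=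
  forall (T : finType) (F G : AF T),
    wf_AF F -> wf_AF G -> args F = args G ->
    (forall x y, att G x y -> att F x y) ->
    (forall x y, conf F x y = conf G x y) ->
    pre T (sigma T F) (sigma T G).

(* Main.v *)
Require Import Defs.
From mathcomp Require Import all_boot.
Set Implicit Arguments. Unset Strict Implicit. Unset Printing Implicit Defensive.

Definition a0 : 'I_3 := @Ordinal 3 0 isT.
Definition a1 : 'I_3 := @Ordinal 3 1 isT.
Definition a2 : 'I_3 := @Ordinal 3 2 isT.

Lemma I3P (x : 'I_3) : [\/ x = a0, x = a1 | x = a2].
Proof.
case: x => [[|[|[|m]]] Hm]; [apply: Or31|apply: Or32|apply: Or33|by []]; exact: val_inj.
Qed.

Lemma existsI3 (P : pred 'I_3) : [exists a, P a] = [|| P a0, P a1 | P a2].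
Proof.
apply/existsP/idP => [[a]|]; first by case: (I3P a) => -> ->; rewrite ?orbT.
by case/or3P => h; [exists a0|exists a1|exists a2].
Qed.

Definition Fatt (x y : 'I_3) : bool :=
  let i := nat_of_ord x in let j := nat_of_ord y in
  [|| (i == 0) && (j == 1), (i == 0) && (j == 2), (i == 1) && (j == 0),
      (i == 1) && (j == 1) | (i == 2) && (j == 0)].
Definition Gatt (x y : 'I_3) : bool :=
  let i := nat_of_ord x in let j := nat_of_ord y in
  [|| (i == 0) && (j == 1), (i == 1) && (j == 0),
      (i == 1) && (j == 1) | (i == 2) && (j == 0)].
Definition Fa : AF 'I_3 := mkAF [set: 'I_3] Fatt.
Definition Ga : AF 'I_3 := mkAF [set: 'I_3] Gatt.

Lemma t1 : ~~ Gatt a2 a2. Proof. by []. Qed.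
Lemma t2 : (a0 \in [set a2]) = false. Proof. by rewrite inE. Qed.
Lemma t3 : [exists a, Gatt a a1] = true. Proof. by rewrite existsI3. Qed.
Implicit Types (S U : {set 'I_3}).

Arguments Cit : simpl never.
Lemma CitS (H : AF 'I_3) S a n :
  Cit H S a n.+1 = scc (restrict H (Cit H S a n :\: DS H S (Cit H S a n))) a.
Proof. by []. Qed.
Lemma Cit0 (H : AF 'I_3) S a : Cit H S a 0 = scc H a.
Proof. by []. Qed.

Lemma cfP (H : AF 'I_3) S : reflect (S \subset args H /\ forall x y, x \in S -> y \in S -> ~~ att H x y)
  (conflict_free H S).
Proof.
apply: (iffP andP) => [[sA /forallP A]|[sA A]]; split=> //.
  move=> x y xS yS; have:= A x; rewrite xS /= => /forallP /(_ y); by rewrite yS.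
apply/forallP=> x; apply/implyP=> xS; apply/forallP => y; apply/implyP => yS; exact: A.
Qed.

Lemma range_sub (H : AF 'I_3) U : U \subset args H -> range H U \subset args H.
Proof.
move=> sU; rewrite /range subUset sU /=; apply/subsetP=> x; rewrite inE => /andP[]; done.
Qed.

Lemma stg_full (H : AF 'I_3) S : conflict_free H S -> args H \subset range H S -> S \in stg H.
Proof.
move=> cf sA; rewrite inE cf /=; apply/forallP=> U; apply/implyP=> cfU.
apply/negP => /properP [_ [x xU xS]].
have sU : U \subset args H by case/andP: cfU.
have := subsetP (range_sub sU) x xU => /(subsetP sA); by rewrite (negbTE xS).
Qed.

Lemma in_scc (H : AF 'I_3) a b : (b \in scc H a) =
  [&& b \in args H, a \in args H, connect (attA H) a b & connect (attA H) b a].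
Proof. by rewrite inE !andbA. Qed.

Lemma connect_cl (e : rel 'I_3) (C : {set 'I_3}) x y :
  (forall u v, e u v -> u \in C -> v \in C) -> x \in C -> connect e x y -> y \in C.
Proof.
move=> cl xC /connectP [p pth ->]; elim: p x xC pth => //= z p IH x xC /andP[exz pz].
exact: IH (cl _ _ exz xC) pz.
Qed.

Lemma scc_single (H : AF 'I_3) a : args H = [set a] -> scc H a = [set a].
Proof.
move=> hA; apply/setP => b; rewrite in_scc hA !inE eqxx /=.
by case: eqP => [->|]; rewrite ?connect0.
Qed.

Lemma scc_notin (H : AF 'I_3) a : a \notin args H -> scc H a = set0.
Proof. by move=> h; apply/setP => b; rewrite in_scc inE (negbTE h) andbF. Qed.

Lemma DS_T (H : AF 'I_3) S : DS H S setT = set0.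
Proof. apply/setP => b; rewrite !inE; apply: negbTE; apply/existsP => [[a]]; by rewrite !inE. Qed.

Section FL.
Variable H : AF 'I_3.
Hypothesis hA : args H = setT.
Hypothesis hE : forall x y, att H x y = Fatt x y.

Lemma attAF x y : attA H x y = Fatt x y.
Proof. by rewrite /attA hE hA !inE !andbT. Qed.

Lemma scc_F a : scc H a = setT.
Proof.
have c0 : forall x, connect (attA H) a0 x && connect (attA H) x a0.
  move=> x; case: (I3P x) => ->; rewrite ?connect0 //;
  by rewrite !connect1 // attAF.
apply/setP => b; rewrite in_scc hA !inE /=.
have /andP [h1 h2] := c0 a; have /andP [h3 h4] := c0 b.
by rewrite (connect_trans h2 h3) (connect_trans h4 h1).
Qed.

Lemma P1 S : S \in stg H -> a0 \in S.
Proof.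
rewrite inE => /andP [/cfP [_ cf] /forallP max].
apply/negPn/negP => n0.
have n1 : a1 \notin S by apply/negP => h; move: (cf _ _ h h); rewrite hE.
have cfU : conflict_free H [set a0].
  apply/cfP; split; first by rewrite hA subsetT.
  by move=> x y; rewrite !inE => /eqP-> /eqP->; rewrite hE.
have := max [set a0]; rewrite cfU /= => /negP; apply.
have rU : forall x, x \in range H [set a0].
  move=> x; rewrite /range !inE hA !inE /=; case: (I3P x) => ->; rewrite ?eqxx //=;
  by rewrite existsI3 !inE /= hE.
apply/properP; split; first by apply/subsetP => x _; exact: rU.
exists a1; first exact: rU.
rewrite /range !inE (negbTE n1) /= hA inE /=; apply/existsP => [[y /andP [yS ay]]].
case: (I3P y) ay yS => -> ay yS; first by rewrite yS in n0.
  by rewrite yS in n1.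
by rewrite hE in ay.
Qed.
End FL.

Lemma FaA : args Fa = setT. Proof. by []. Qed.
Lemma FaE x y : att Fa x y = Fatt x y. Proof. by []. Qed.
Lemma FTA : args (restrict Fa setT) = setT. Proof. by rewrite /= setIT. Qed.
Lemma FTE x y : att (restrict Fa setT) x y = Fatt x y. Proof. by rewrite /= !inE !andbT. Qed.

Lemma stgF S : S \in stg Fa -> a0 \in S.
Proof. exact: P1 FaA FaE S. Qed.

Lemma stg15F S : S \in stg15 Fa -> a0 \in S.
Proof.
rewrite inE => /andP [_ /forallP /(_ a0)]; rewrite FaA in_setT /=.
rewrite (scc_F FaA FaE) DS_T setD0 setIT; exact: P1 FTA FTE S.
Qed.

Lemma alpha0 (H : AF 'I_3) S a : Cit H S a 1 = Cit H S a 0 -> alphaS H S a = 0.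
Proof.
move=> e; rewrite /alphaS.
have ->: iota 0 (#|'I_3|.+2) = 0 :: iota 1 (#|'I_3|.+1) by [].
by rewrite /= e eqxx orbT.
Qed.

Lemma alpha1 (H : AF 'I_3) S a : a \in Cit H S a 0 -> Cit H S a 1 != Cit H S a 0 ->
  (a \notin Cit H S a 1) || (Cit H S a 2 == Cit H S a 1) -> alphaS H S a = 1.
Proof.
move=> h0 h1 h2; rewrite /alphaS.
have ->: iota 0 (#|'I_3|.+2) = [:: 0, 1 & iota 2 #|'I_3|] by [].
by rewrite /= h0 (negbTE h1) h2.
Qed.

Lemma tfF S : S \in tfstg2 Fa -> a0 \in S.
Proof.
rewrite inE => /andP [_ /forallP /(_ a0)]; rewrite FaA in_setT /=.
have C0 : Cit Fa S a0 0 = setT by rewrite Cit0 (scc_F FaA FaE).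
have C1 : Cit Fa S a0 1 = setT by rewrite CitS C0 DS_T setD0 (scc_F FTA FTE).
rewrite alpha0; last by rewrite C0 C1.
rewrite C0 in_setT /= setIT; exact: P1 FTA FTE S.
Qed.

Lemma attAG x y : attA Ga x y = Gatt x y.
Proof. by rewrite /attA /= !inE !andbT. Qed.

Lemma sccG01 a : a \in [set a0; a1] -> scc Ga a = [set a0; a1].
Proof.
have cl : forall u v, attA Ga u v -> u \in [set a0; a1] -> v \in [set a0; a1].
  move=> u v; rewrite attAG !inE; case: (I3P u) => ->; case: (I3P v) => -> //.
have c : forall x y, x \in [set a0; a1] -> y \in [set a0; a1] -> connect (attA Ga) x y.
  move=> x y; rewrite !inE => /orP [] /eqP -> /orP [] /eqP ->; rewrite ?connect0 //;
  by apply: connect1; rewrite attAG.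
move=> ha; apply/setP => b; rewrite in_scc !inE /=.
case: (I3P b) => ->.
- by rewrite !c // !inE eqxx ?orbT.
- by rewrite !c // !inE eqxx ?orbT.
- rewrite /=; apply/negbTE/negP => /andP [/(connect_cl cl ha)]; by rewrite !inE.
Qed.

Lemma sccG2 : scc Ga a2 = [set a2].
Proof.
have cl : forall u v, attA Ga u v -> u \in [set a0; a1] -> v \in [set a0; a1].
  move=> u v; rewrite attAG !inE; case: (I3P u) => ->; case: (I3P v) => -> //.
apply/setP => b; rewrite in_scc !inE /=.
case: (I3P b) => ->.
- apply/negbTE/negP => /andP [_ /(connect_cl cl)]; rewrite !inE eqxx => /(_ isT); done.
- apply/negbTE/negP => /andP [_ /(connect_cl cl)]; rewrite !inE eqxx orbT => /(_ isT); done.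
- by rewrite connect0.
Qed.

Lemma DSG01 : DS Ga [set a2] [set a0; a1] = [set a0].
Proof.
apply/setP => x; rewrite !inE; case: (I3P x) => -> /=; rewrite ?existsI3 ?inE //.
Qed.

Lemma DSG1 : DS Ga [set a2] [set a1] = set0.
Proof. apply/setP => x; rewrite !inE; case: (I3P x) => -> /=; rewrite ?existsI3 ?inE //. Qed.

Lemma DSG2 : DS Ga [set a2] [set a2] = set0.
Proof. apply/setP => x; rewrite !inE; case: (I3P x) => -> /=; rewrite ?existsI3 ?inE //. Qed.

Lemma set01D0 : [set a0; a1] :\: [set a0] = [set a1].
Proof. apply/setP => x; rewrite !inE; case: (I3P x) => -> //. Qed.

Lemma R1 : set0 \in stg (restrict Ga [set a1]).
Proof.
rewrite inE; apply/andP; split.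
  by apply/cfP; split; [exact: sub0set | move=> x y; rewrite inE].
apply/forallP => U; apply/implyP => /cfP [sU cfU].
suff -> : U = set0 by rewrite properxx.
apply/setP => x; rewrite inE; apply/negP => xU.
have := subsetP sU x xU; rewrite /= !inE => /eqP ex; subst x.
by move: (cfU _ _ xU xU); rewrite /= !inE.
Qed.

Lemma R2 : [set a2] \in stg (restrict Ga [set a2]).
Proof.
apply: stg_full.
  apply/cfP; split; first by rewrite /= setTI.
  by move=> x y; rewrite !inE => /eqP-> /eqP->.
apply/subsetP => x; rewrite /= !inE => /eqP ->; by rewrite eqxx.
Qed.

Lemma cfG2 : conflict_free Ga [set a2].
Proof.
apply/cfP; split; first by rewrite subsetT.
by move=> x y; rewrite !inE => /eqP-> /eqP->.
Qed.

Lemma stgG : [set a2] \in stg Ga.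
Proof.
rewrite inE cfG2 /=; apply/forallP => U; apply/implyP => /cfP [_ cfU].
apply/negP => /properP [sub [x xU xS]].
have hr2 : a2 \in range Ga U by apply: (subsetP sub); rewrite !inE eqxx.
have U2 : a2 \in U.
  move: hr2; rewrite !inE; case: (a2 \in U) => //=.
  by rewrite existsI3 /= ?andbF.
case: (I3P x) xU xS => -> xU xS.
- by move: xS; rewrite !inE /= existsI3 !inE eqxx.
- move: xU; rewrite !inE /= existsI3 /= ?andbT ?andbF ?orbF.
  case/or3P => h; first by move: (cfU _ _ h h).
    by move: (cfU _ _ U2 h).
  by move: (cfU _ _ h h).
- by move: xS; rewrite !inE eqxx.
Qed.

Lemma I201 : [set a2] :&: [set a0; a1] = set0.
Proof. apply/setP => x; rewrite !inE; case: (I3P x) => -> //. Qed.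
Lemma I21 : [set a2] :&: [set a1] = set0.
Proof. apply/setP => x; rewrite !inE; case: (I3P x) => -> //. Qed.
Lemma argsR1 : args (restrict Ga [set a1]) = [set a1].
Proof. by rewrite /= setTI. Qed.
Lemma argsR2 : args (restrict Ga [set a2]) = [set a2].
Proof. by rewrite /= setTI. Qed.

Lemma m0 : a0 \in [set a0; a1]. Proof. by rewrite !inE eqxx. Qed.
Lemma m1 : a1 \in [set a0; a1]. Proof. by rewrite !inE eqxx orbT. Qed.

Lemma stg15G : [set a2] \in stg15 Ga.
Proof.
rewrite inE cfG2 /=; apply/forallP => a; apply/implyP => _.
case: (I3P a) => ->.
- by rewrite (sccG01 m0) DSG01 set01D0 I201 R1.
- by rewrite (sccG01 m1) DSG01 set01D0 I201 R1.
- by rewrite sccG2 DSG2 setD0 setIid R2.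
Qed.

Lemma tfG : [set a2] \in tfstg2 Ga.
Proof.
rewrite inE cfG2 /=; apply/forallP => a; apply/implyP => _.
case: (I3P a) => ->.
- have C0 : Cit Ga [set a2] a0 0 = [set a0; a1] by rewrite Cit0 (sccG01 m0).
  have C1 : Cit Ga [set a2] a0 1 = set0.
    by rewrite CitS C0 DSG01 set01D0 scc_notin // argsR1 inE.
  rewrite /= (@alpha1 Ga [set a2] a0).
  + by rewrite C1 inE.
  + by rewrite C0 m0.
  + rewrite C0 C1; apply/eqP => /setP /(_ a0); by rewrite !inE.
  + by rewrite C1 inE.
- have C0 : Cit Ga [set a2] a1 0 = [set a0; a1] by rewrite Cit0 (sccG01 m1).
  have C1 : Cit Ga [set a2] a1 1 = [set a1].
    by rewrite CitS C0 DSG01 set01D0 scc_single // argsR1.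
  have C2 : Cit Ga [set a2] a1 2 = [set a1].
    by rewrite CitS C1 DSG1 setD0 scc_single // argsR1.
  rewrite /= (@alpha1 Ga [set a2] a1); first by rewrite C1 I21 R1 orbT.
  + by rewrite C0 m1.
  + rewrite C0 C1; apply/eqP => /setP /(_ a0); by rewrite !inE.
  + by rewrite C2 C1 eqxx orbT.
- have C0 : Cit Ga [set a2] a2 0 = [set a2] by rewrite Cit0 sccG2.
  have C1 : Cit Ga [set a2] a2 1 = [set a2].
    by rewrite CitS C0 DSG2 setD0 scc_single // argsR2.
  by rewrite /= alpha0 ?C0 ?C1 // setIid R2 orbT.
Qed.

Lemma refute (sigma : semantics) :
  (forall S, S \in sigma _ Fa -> a0 \in S) -> [set a2] \in sigma _ Ga ->
  ~ skepticism_adequate (@prec_cap) sigma /\ ~ skepticism_adequate (@prec_W) sigma.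
Proof.
move=> hF hG.
have wF : wf_AF Fa by move=> x y _; rewrite !inE.
have wG : wf_AF Ga by move=> x y _; rewrite !inE.
have sub : forall x y, att Ga x y -> att Fa x y.
  move=> x y; case: (I3P x) => ->; case: (I3P y) => -> //.
have cf : forall x y, conf Fa x y = conf Ga x y.
  move=> x y; case: (I3P x) => ->; case: (I3P y) => -> //.
split => adq.
- have := adq _ Fa Ga wF wG erefl sub cf; rewrite /prec_cap => /subsetP /(_ a0).
  have h0 : a0 \in \bigcap_(S in sigma _ Fa) S by apply/bigcapP.
  move/(_ h0)/bigcapP/(_ _ hG); by rewrite inE.
- have := adq _ Fa Ga wF wG erefl sub cf; rewrite /prec_W => /forallP /(_ [set a2]).
  rewrite hG /= => /existsP [S1 /andP [/hF h0 /subsetP /(_ a0 h0)]]; by rewrite inE.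
Qed.

Theorem theorem17 :
  ~ skepticism_adequate (@prec_cap) (@stg) /\ ~ skepticism_adequate (@prec_W) (@stg) /\
  ~ skepticism_adequate (@prec_cap) (@tfstg2) /\ ~ skepticism_adequate (@prec_W) (@tfstg2) /\
  ~ skepticism_adequate (@prec_cap) (@stg15) /\ ~ skepticism_adequate (@prec_W) (@stg15).
Proof.
have [h1 h2] := refute stgF stgG.
have [h3 h4] := refute tfF tfG.
have [h5 h6] := refute stg15F stg15G.
by do !split.
Qed.
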